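(* Let $\{c_n\}_{n\in\mathbb{N}^+}$ be a sequence of real numbers with $c_n\to\infty$ as $n\to\infty$. Then there exists a continuous function $f:\mathbb{R}\to\mathbb{R}$ which is Lebesgue integrable on $\mathbb{R}$ and such that for every real $x\neq 0$, $$\limsup_{n\to\infty} c_n\, f(n\,x)=\infty,$$ where $n$ ranges over the positive integers.
   Context: $\mathbb{N}^+=\{1,2,\dots\}$. *)

(* Defs.v *)
From HB Require Import structures.
From mathcomp Require Import all_boot all_order all_algebra.
From mathcomp Require Import all_classical all_reals all_analysis.

(* Main.v *)
Require Import Defs.
From HB Require Import structures.
From mathcomp Require Import all_boot all_order all_algebra.
From mathcomp Require Import all_classical all_reals all_analysis.
From mathcomp Require Import ring lra measurable_realfun.
Import Order.TTheory GRing.Theory Num.Theory.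
Import numFieldTopology.Exports numFieldNormedType.Exports.
Local Open Scope classical_set_scope.
Local Open Scope ring_scope.

Section S.
Variable R : realType.

Definition trap (a b s : R) : R :=
  Num.max 0 (Num.min 1 (Num.min (s - a + 1) (b + 1 - s))).

Lemma trap_ge0 a b s : 0 <= trap a b s.
Proof. by rewrite /trap le_max lexx. Qed.

Lemma trap_le1 a b s : trap a b s <= 1.
Proof. by rewrite /trap ge_max ler01 ge_min lexx. Qed.

Lemma trap_one a b s : a <= s -> s <= b -> trap a b s = 1.
Proof.
move=> h1 h2; rewrite /trap.
have H : 1 <= Num.min (s - a + 1) (b + 1 - s).
  by rewrite le_min; apply/andP; split; lra.
by rewrite (min_l H) (max_r ler01).
Qed.

Lemma trap_zero a b s : s <= a - 1 -> trap a b s = 0.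
Proof.
move=> h1; rewrite /trap.
have H : Num.min 1 (Num.min (s - a + 1) (b + 1 - s)) <= 0.
  by rewrite !ge_min; apply/orP; right; apply/orP; left; lra.
by rewrite (max_l H).
Qed.

Lemma trap_supp a b s : trap a b s != 0 -> a - 1 <= s <= b + 1.
Proof.
move=> h; apply/andP; split; rewrite leNgt; apply/negP => hs; move/negP: h; apply.
  by rewrite trap_zero //; lra.
rewrite /trap.
have H : Num.min 1 (Num.min (s - a + 1) (b + 1 - s)) <= 0.
  by rewrite !ge_min; apply/orP; right; apply/orP; right; lra.
by rewrite (max_l H).
Qed.

Lemma trap_cont a b : continuous (trap a b).
Proof.
move=> x; rewrite /trap.
apply: (@continuous_max _ _ (cst 0) (fun s => Num.min 1 (Num.min (s - a + 1) (b + 1 - s)))).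
  exact: cvg_cst.
apply: (@continuous_min _ _ (cst 1) (fun s => (Num.min (s - a + 1) (b + 1 - s)))).
  exact: cvg_cst.
apply: (@continuous_min _ _ (fun s => s - a + 1) (fun s => b + 1 - s)).
  by apply: continuousD; [apply: continuousB; [exact: cvg_id|exact: cvg_cst]|exact: cvg_cst].
by apply: continuousB; [exact: cvg_cst|exact: cvg_id].
Qed.
Definition hh (j : nat) : R := ((j.+1)%:R * (j.+2)%:R ^+ 2)^-1.
Lemma hh_gt0 j : 0 < hh j.
Proof. by rewrite /hh invr_gt0 mulr_gt0 // exprn_gt0. Qed.

Variable A : nat -> nat.
Hypothesis hA : forall i, (i < A i)%N.

Definition g (j : nat) (t : R) : R := hh j * trap (A j)%:R (A j + j)%:R `|t|.
Definition NN (t : R) : nat := (Num.truncn `|t|).+2.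
Definition F (M : nat) (t : R) : R := \sum_(0 <= i < M) g i t.
Definition ff (t : R) : R := F (NN t) t.

Lemma g_ge0 j t : 0 <= g j t.
Proof. by rewrite /g mulr_ge0 ?trap_ge0 // ltW // hh_gt0. Qed.

Lemma g_zero i t : (NN t <= i)%N -> g i t = 0.
Proof.
move=> Hi; rewrite /g trap_zero ?mulr0 //.
have /andP[_ h2] := truncn_itv (normr_ge0 t).
set k := Num.truncn `|t| in h2 Hi.
have H3 : ((k.+3)%:R <= (A i)%:R :> R).
  by rewrite ler_nat; apply: leq_trans (hA i); rewrite /NN in Hi.
move: H3 h2; rewrite -[k.+3]addn2 natrD -[k.+1]addn1 natrD; lra.
Qed.

Lemma F_ext M t : (NN t <= M)%N -> F M t = ff t.
Proof.
move=> HM; rewrite /ff /F (big_cat_nat _ (n:=NN t)) //=.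
rewrite [X in _ + X]big_nat_cond [X in _ + X]big1 ?addr0 // => i /andP[/andP[Hi _] _]; exact: g_zero.
Qed.

Lemma ff_ge_g j t : g j t <= ff t.
Proof.
rewrite -(F_ext (maxn (NN t) j.+1) t) ?leq_maxl // /F.
rewrite (big_cat_nat _ (n:=j)) //=; last by rewrite leq_max leqnSn orbT.
rewrite (big_cat_nat _ (m:=j) (n:=j.+1)) //=; last by rewrite leq_max leqnn orbT.
rewrite big_nat1 ler_wpDl ?ler_wpDr //; apply: sumr_ge0 => i _; exact: g_ge0.
Qed.

Lemma ff_ge0 t : 0 <= ff t.
Proof. exact: le_trans (g_ge0 0 t) (ff_ge_g 0 t). Qed.
Lemma g_cont j : continuous (g j).
Proof.
move=> x; rewrite /g.
apply: (@continuousM _ _ (cst (hh j)) (fun t => trap (A j)%:R (A j + j)%:R `|t|)).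
  exact: cvg_cst.
exact: (continuous_comp (@norm_continuous _ R^o x) (trap_cont _ _ _)).
Qed.

Lemma F_cont M : continuous (F M).
Proof.
elim: M => [|M IH] x.
  rewrite /F; under eq_fun do rewrite big_geq //; exact: cvg_cst.
have -> : F M.+1 = (F M) + (g M).
  by apply/funext => t; rewrite /F big_nat_recr //.
by apply: continuousD; [exact: IH|exact: g_cont].
Qed.

Lemma NN_near t0 t : `|t0 - t| < 1 -> (NN t <= (NN t0).+1)%N.
Proof.
move=> h; rewrite /NN !ltnS -ltnS truncn_lt_nat //.
have /andP[_ h2] := truncn_itv (normr_ge0 t0).
have h3 := ler_normB t0 (t0 - t).
have E : t0 - (t0 - t) = t by ring.
rewrite E in h3.
move: h2 h3; rewrite -[(Num.truncn _).+2]addn1 natrD; lra.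
Qed.

Lemma ff_cont : continuous ff.
Proof.
move=> t0.
have e : {near t0, F (NN t0).+1 =1 ff}.
  near=> t; apply: F_ext; apply: NN_near.
  near: t; apply: filterS (@near_ball R R^o t0 1 ltr01) => t.
  by rewrite /ball /=.
have E0 : F (NN t0).+1 t0 = ff t0 by rewrite F_ext.
rewrite /prop_for /continuous_at -E0.
apply: cvg_trans (near_eq_cvg e) _; exact: F_cont.
Unshelve. all: by end_near.
Qed.
Lemma ff_series x : (ff x)%:E = (\sum_(n <oo) (g n x)%:E)%E.
Proof.
apply/esym/lim_near_cst => //; near=> n.
rewrite sumEFin; congr (_%:E); apply: F_ext.
near: n; by exists (NN x).
Unshelve. all: by end_near.
Qed.

Definition SS j : set R :=
  `[((A j)%:R - 1)%R, ((A j + j)%:R + 1)%R]%classic `|`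
  `[(- ((A j + j)%:R + 1))%R, (- ((A j)%:R - 1))%R]%classic.

Lemma g_le_indic j x : (g j x <= hh j * \1_(SS j) x)%R.
Proof.
rewrite /g; have [t0|t0] := eqVneq (trap (A j)%:R (A j + j)%:R `|x|) 0.
  by rewrite t0 mulr0 mulr_ge0 // ltW // hh_gt0.
have /andP[h1 h2] := trap_supp _ _ _ t0.
have hS : x \in SS j.
  rewrite inE /SS; have [x0|x0] := @leP _ R 0%R x.
    left; rewrite /= in_itv /=; move: h1 h2; rewrite ger0_norm //.
    by move=> -> ->.
  right; rewrite /= in_itv /=; move: h1 h2; rewrite ltr0_norm //.
  by move=> ? ?; apply/andP; split; lra.
rewrite indicE hS mulr1 ler_piMr ?trap_le1 // ?trap_ge0 // ?ltW // ?hh_gt0 //.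
Qed.

Lemma int_g j : (\int[@lebesgue_measure R]_(x in setT) (g j x)%:E <= (hh j * (2 * (j.+2)%:R))%:E)%E.
Proof.
Local Open Scope ereal_scope.
have mS : measurable (SS j) by apply: measurableU.
apply: (@le_trans _ _ (\int[@lebesgue_measure R]_(x in setT) (hh j * \1_(SS j) x)%:E)).
  apply: ge0_le_integral => //.
- by move=> x _; rewrite lee_fin g_ge0.
- by apply/measurable_realfun.measurable_EFinP; apply: measurable_realfun.continuous_measurable_fun; exact: g_cont.
- apply/measurable_realfun.measurable_EFinP; apply: measurable_funM => //; exact: measurable_indic.
- by move=> x _; rewrite lee_fin g_le_indic.
have H := @integralZl_indic _ _ _ (@lebesgue_measure R) setT measurableT (fun=> SS j) (hh j).
rewrite /= in H; rewrite H //; last by move=> /ltW; rewrite leNgt hh_gt0.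
rewrite integral_indic // setIT EFinM; apply: lee_wpmul2l; first by rewrite lee_fin ltW // hh_gt0.
rewrite /SS; apply: (le_trans (measureU2 (@lebesgue_measure R) (measurable_itv _) (measurable_itv _))).
have E1 : ((A j)%:R - 1 < (A j + j)%:R + 1 :> R)%R.
  by rewrite natrD; have := ler0n R j; lra.
have M1 : (@lebesgue_measure R) `[((A j)%:R - 1)%R, ((A j + j)%:R + 1)%R]%classic = (((A j + j)%:R + 1) - ((A j)%:R - 1))%:E.
  by rewrite lebesgue_measure_itv /= lte_fin E1 -EFinD.
have M2 : (@lebesgue_measure R) `[(- ((A j + j)%:R + 1))%R, (- ((A j)%:R - 1))%R]%classic = (((A j + j)%:R + 1) - ((A j)%:R - 1))%:E.
  rewrite lebesgue_measure_itv /= lte_fin ltrN2 E1 -EFinD; congr (_%:E); ring.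
apply: (@le_trans _ _ ((((A j + j)%:R + 1) - ((A j)%:R - 1))%:E + (((A j + j)%:R + 1) - ((A j)%:R - 1))%:E)).
  by apply: leeD; [rewrite -M1|rewrite -M2].
rewrite -EFinD lee_fin natrD -[j.+2]addn2 natrD; have := ler0n R j; lra.
Qed.
Local Open Scope ring_scope.
Lemma tele n : (\sum_(0 <= j < n) (hh j * (2 * (j.+2)%:R)) = 2 - 2 / (n.+1)%:R)%R.
Proof.
elim: n => [|n IH]; first by rewrite big_geq // divr1 subrr.
rewrite big_nat_recr //= IH /hh.
have h1 : (n.+1)%:R != 0 :> R by rewrite pnatr_eq0.
have h2 : (n.+2)%:R != 0 :> R by rewrite pnatr_eq0.
have E : (n.+2)%:R = (n.+1)%:R + 1 :> R by rewrite -addn1 natrD.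
rewrite E; field; have p := ler0n R n; apply/andP; split; apply/negP => /eqP; lra.
Qed.

Lemma series_le2 : (\sum_(j <oo) (hh j * (2 * (j.+2)%:R))%:E <= 2%:E)%E.
Proof.
have h0 : forall n, (0 <= n)%N -> true -> (0 <= (hh n * (2 * (n.+2)%:R))%:E)%E.
  by move=> n _ _; rewrite lee_fin mulr_ge0 // ltW // hh_gt0.
move/ereal_nondecreasing_series/ereal_nondecreasing_cvgn/cvg_lim : h0 => ->//.
apply: ge_ereal_sup => _ [n _ <-] /=.
rewrite sumEFin tele lee_fin lerBlDr lerDl divr_ge0 //.
Qed.

Lemma ff_integrable : (@lebesgue_measure R).-integrable setT (fun x => (ff x)%:E).
Proof.
apply/integrableP; split.
  by apply/measurable_EFinP; apply: continuous_measurable_fun; exact: ff_cont.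
under eq_integral => x _ do rewrite gee0_abs ?lee_fin ?ff_ge0 // ff_series.
rewrite integral_nneseries //; last first.
- by move=> n x _; rewrite lee_fin g_ge0.
- by move=> n; apply/measurable_EFinP; apply: continuous_measurable_fun; exact: g_cont.
apply: (le_lt_trans _ (le_lt_trans series_le2 (ltry _))).
apply: lee_nneseries => [i _ _|i _]; last exact: int_g.
by apply: integral_ge0 => x _; rewrite lee_fin g_ge0.
Qed.
Local Open Scope ring_scope.
Variable c : nat -> R.
Hypothesis hAc : forall j n, (A j < j * n)%N -> (j <= n)%N /\ j%:R / hh j <= c n.

Lemma key x (x0 : x != 0) m (M : R) : exists n, (m <= n)%N /\ M <= c n * ff (n%:R * x).
Proof.
set j := maxn (maxn m (Num.truncn `|M|).+1) (Num.truncn `|x|).+1.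
have hjm : (m <= j)%N by rewrite /j !leq_max leqnn.
have hjM : M < j%:R.
  have /andP[_ h] := truncn_itv (normr_ge0 M).
  have h2 : ((Num.truncn `|M|).+1 <= j)%N by rewrite /j !leq_max leqnn orbT.
  have h3 : ((Num.truncn `|M|).+1%:R <= j%:R :> R) by rewrite ler_nat.
  have h4 := ler_norm M; lra.
have hjx : `|x| < j%:R.
  have /andP[_ h] := truncn_itv (normr_ge0 x).
  have h2 : ((Num.truncn `|x|).+1 <= j)%N by rewrite /j !leq_max leqnn orbT.
  have h3 : ((Num.truncn `|x|).+1%:R <= j%:R :> R) by rewrite ler_nat.
  lra.
have xpos : 0 < `|x| by rewrite normr_gt0.
set q := (A j)%:R / `|x|.
have q0 : 0 <= q by rewrite divr_ge0.
have qx : q * `|x| = (A j)%:R by rewrite /q divfK // gt_eqF.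
set n := (Num.truncn q).+1.
have /andP[hq1 hq2] := truncn_itv q0.
have nq : n%:R = (Num.truncn q)%:R + 1 :> R by rewrite /n -addn1 natrD.
have h1 : (A j)%:R < n%:R * `|x|.
  by rewrite -qx ltr_pM2r // nq.
have h2 : n%:R * `|x| <= (A j)%:R + `|x|.
  by rewrite -qx nq mulrDl mul1r lerD2r ler_pM2r.
have hnx : `|n%:R * x| = n%:R * `|x| by rewrite normrM normr_nat.
have hAj : (A j < j * n)%N.
  rewrite -(ltr_nat R) natrM (lt_le_trans h1) // [j%:R * _]mulrC; apply: ler_wpM2l => //; exact: ltW.
have [hjn hc] := hAc _ _ hAj.
exists n; split; first exact: leq_trans hjn.
have hg : hh j <= ff (n%:R * x).
  apply: le_trans (ff_ge_g j _); rewrite /g hnx trap_one ?mulr1 //.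
    exact: ltW.
  by rewrite natrD; lra.
have K0 : 0 <= j%:R / hh j by rewrite divr_ge0 // ltW // hh_gt0.
apply: (le_trans (ltW hjM)).
have -> : j%:R = j%:R / hh j * hh j :> R by rewrite divfK // gt_eqF // hh_gt0.
by apply: ler_pM => //; apply: ltW; apply: hh_gt0.
Qed.
End S.

Lemma esup_infty (R : realType) (u : nat -> R) :
  (forall m (M : R), exists n, (m <= n)%N /\ M <= u n) ->
  limn_esup (fun n => (u n)%:E) = +oo%E.
Proof.
move=> H; rewrite limn_esup_lim.
have -> : esups (fun n => (u n)%:E) = fun=> +oo%E.
  apply/funext => m; rewrite /esups /=.
  case E: (ereal_sup _) => [r| |] //.
  - have [n [mn hn]] := H m (r + 1).
    have : ((u n)%:E <= r%:E)%E.
      by rewrite -E; apply: ereal_sup_ubound; exists n.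
    rewrite lee_fin => h; exfalso; clear E; lra.
  - have [n [mn hn]] := H m 0.
    have : ((u n)%:E <= -oo)%E.
      by rewrite -E; apply: ereal_sup_ubound; exists n.
    by rewrite leeNy_eq.
exact: lim_cst.
Qed.
From mathcomp Require Import zify.

Theorem theorem1 (R : realType) (c : nat -> R) (hc : c @ \oo --> +oo) :
  exists f : R -> R,
    continuous f /\
    (@lebesgue_measure R).-integrable setT (fun x => (f x)%:E) /\
    (forall x : R, x != 0 ->
       limn_esup (fun n : nat => (c n * f (n%:R * x))%:E) = +oo%E).
Proof.
have ex : forall K : R, exists N : nat, forall n, (N <= n)%N -> K <= c n.
  move=> K; have := (proj1 (cvgryPge c) hc K).
  by move=> [N _ HN]; exists N => n Nn; apply: HN.
pose Nf K := projT1 (cid (ex K)).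
have HNf : forall K n, (Nf K <= n)%N -> K <= c n.
  by move=> K; exact: (projT2 (cid (ex K))).
pose A j := (j.+1 * (Nf (j%:R / hh R j) + j).+1)%N.
have hA : forall i, (i < A i)%N.
  by move=> i; rewrite /A; apply: leq_pmulr.
have hAc : forall j n, (A j < j * n)%N -> (j <= n)%N /\ j%:R / hh R j <= c n.
  move=> j n; rewrite /A => h.
  set N := Nf (j%:R / hh R j) in h *.
  have h2 : (N + j < n)%N by nia.
  split; first by lia.
  apply: HNf; lia.
exists (ff R A); split; first exact: ff_cont.
split; first exact: ff_integrable.
move=> x x0; apply: esup_infty => m M.
exact: (@key R A hA c hAc x x0 m M).
Qed.
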